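(* Let $f\colon\mathbb{R}^d\to\mathbb{R}\cup\{+\infty\}$ be $\rho$-weakly convex and let $\{f_x\}_{x\in\mathbb{R}^d}$ be a two-sided model family with constant $q$. Fix $a\in(0,1)$, $\mu$ with $\mu^{-1}>\rho+q$, $\theta>q$, $x_0\in\mathbb{R}^d$, and define $$x_{k+1}=\operatorname{argmin}_{x\in\mathbb{R}^d}\Big\{f_{x_k}(x)+\frac{1+\theta\mu}{2\mu}\Big\|x-\frac{x_0+\theta\mu x_k}{1+\theta\mu}\Big\|^2\Big\},\quad k\ge0.$$ If $K\ge2\log(a^{-1})\big/\log\big(\frac{\mu^{-1}-\rho+\theta}{q+\theta}\big)$, then $\|x_K-\mathrm{prox}_{\mu f}(x_0)\|\le a\|x_0-\mathrm{prox}_{\mu f}(x_0)\|$.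
   Context: Two-sided model family: for each $x\in\mathbb{R}^d$, $f_x\colon\mathbb{R}^d\to\mathbb{R}\cup\{+\infty\}$ is closed and $\rho$-weakly convex (i.e. $f_x+\frac\rho2\|\cdot\|^2$ is convex) and satisfies $|f_x(y)-f(y)|\le\frac q2\|y-x\|^2$ for all $y\in\mathbb{R}^d$. $\mathrm{prox}_{\mu f}(x)=\operatorname{argmin}_y\{f(y)+\frac1{2\mu}\|y-x\|^2\}$. *)

(* Defs.v *)
From HB Require Import structures.
From mathcomp Require Import all_boot all_order all_algebra.
From mathcomp Require Import all_classical all_reals all_analysis.
Set Implicit Arguments. Unset Strict Implicit. Unset Printing Implicit Defensive.
Import Order.TTheory GRing.Theory Num.Theory.
Import numFieldNormedType.Exports.
Local Open Scope classical_set_scope.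
Local Open Scope ring_scope.

Definition edot {R : realType} {d : nat} (u v : 'rV[R]_d) : R :=
  \sum_(i < d) u ord0 i * v ord0 i.
Definition enorm {R : realType} {d : nat} (u : 'rV[R]_d) : R :=
  Num.sqrt (edot u u).

(* g takes values in R \cup {+oo} *)
Definition no_minus_infty {R : realType} {d : nat} (g : 'rV[R]_d -> \bar R) :=
  forall y, g y != -oo%E.

Definition proper_fun {R : realType} {d : nat} (g : 'rV[R]_d -> \bar R) :=
  exists y, (g y < +oo)%E.

(* closed = lower semicontinuous: all sublevel sets are closed *)
Definition closed_fun {R : realType} {d : nat} (g : 'rV[R]_d -> \bar R) :=
  forall t : R, closed [set y | (g y <= t%:E)%E].

Definition convex_efun {R : realType} {d : nat} (g : 'rV[R]_d -> \bar R) :=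
  forall (x y : 'rV[R]_d) (t : R), 0 <= t -> t <= 1 ->
    (g (t *: x + (1 - t) *: y)%R <= t%:E * g x + (1 - t)%:E * g y)%E.

Definition weakly_convex {R : realType} {d : nat} (rho : R) (g : 'rV[R]_d -> \bar R) :=
  convex_efun (fun y => (g y + (rho / 2 * enorm y ^+ 2)%:E)%E).

Definition is_argmin {R : realType} {d : nat} (phi : 'rV[R]_d -> \bar R) (z : 'rV[R]_d) :=
  forall y, (phi z <= phi y)%E.

Definition is_prox {R : realType} {d : nat} (mu : R) (f : 'rV[R]_d -> \bar R) (x p : 'rV[R]_d) :=
  is_argmin (fun y => (f y + (1 / (2 * mu) * enorm (y - x) ^+ 2)%:E)%E) p.

Definition two_sided_model {R : realType} {d : nat} (rho q : R)
  (f : 'rV[R]_d -> \bar R) (fm : 'rV[R]_d -> 'rV[R]_d -> \bar R) :=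
  forall x, [/\ closed_fun (fm x), no_minus_infty (fm x), weakly_convex rho (fm x) &
    forall y, (fm x y <= f y + (q / 2 * enorm (y - x) ^+ 2)%:E)%E /\
              (f y <= fm x y + (q / 2 * enorm (y - x) ^+ 2)%:E)%E].

(* Main.v *)
Require Import Defs.
From HB Require Import structures.
From mathcomp Require Import all_boot all_order all_algebra.
From mathcomp Require Import all_classical all_reals all_analysis.
From mathcomp Require Import ring lra.
Import Order.TTheory GRing.Theory Num.Theory.
Local Open Scope ring_scope.

Section Aux.
Variables (R : realType) (d : nat).
Implicit Types (u v w : 'rV[R]_d).

Lemma edot_ge0 u : 0 <= edot u u.
Proof. by apply: sumr_ge0 => i _; rewrite -expr2 sqr_ge0. Qed.

Lemma enorm2 u : enorm u ^+ 2 = edot u u.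
Proof. by rewrite /enorm sqr_sqrtr // edot_ge0. Qed.

Lemma enorm_ge0 u : 0 <= enorm u.
Proof. exact: sqrtr_ge0. Qed.

Lemma enormN u v : enorm (u - v) = enorm (v - u).
Proof.
rewrite /enorm /edot; congr Num.sqrt; apply: eq_bigr => i _.
rewrite !mxE; ring.
Qed.

Lemma enorm_comb (t : R) u v :
  enorm (t *: u + (1 - t) *: v) ^+ 2 =
  t * enorm u ^+ 2 + (1 - t) * enorm v ^+ 2 - t * (1 - t) * enorm (u - v) ^+ 2.
Proof.
rewrite !enorm2 /edot !mulr_sumr -big_split -sumrB /=.
apply: eq_bigr => i _; rewrite !mxE; ring.
Qed.
Lemma lim_lem (A B k : R) : 0 <= k ->
  (forall t, 0 < t -> t < 1 -> A + k * (1 - t) <= B) -> A + k <= B.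
Proof.
move=> k0 H; apply/ler_addgt0Pr => e e0.
set t := e / (k + e + 1).
have kp : 0 < k + e + 1 by lra.
have t0 : 0 < t by rewrite divr_gt0.
have t1 : t < 1 by rewrite /t ltr_pdivrMr // mul1r; lra.
have kt : k * t <= e by rewrite /t mulrA ler_pdivrMr //; nra.
have := H t t0 t1; lra.
Qed.
Lemma fin_le (e : \bar R) (r s : R) : e != -oo%E -> (e + r%:E <= s%:E)%E ->
  e \is a fin_num /\ fine e + r <= s.
Proof. by case: e => [x| |] //= _; rewrite -EFinD lee_fin. Qed.

Lemma test (t Gm Gy c Mz Yz k D : R) : 0 < t ->
  t * Gm + t * c * Mz <= t * Gy + t * c * Yz - k * t * (1 - t) * D ->
  Gm + c * Mz + k * D * (1 - t) <= Gy + c * Yz.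
Proof.
move=> t0 H.
have : t * (Gm + c * Mz + k * D * (1 - t) - (Gy + c * Yz)) <= 0 by lra.
by rewrite pmulr_rle0 // subr_le0.
Qed.

Lemma sc (g : 'rV[R]_d -> \bar R) (rho c : R) z m y :
  weakly_convex rho g -> no_minus_infty g -> rho / 2 <= c ->
  is_argmin (fun v => (g v + (c * enorm (v - z) ^+ 2)%:E)%E) m ->
  g y != +oo%E ->
  g m \is a fin_num /\
  fine (g m) + c * enorm (m - z) ^+ 2 + (c - rho / 2) * enorm (y - m) ^+ 2
    <= fine (g y) + c * enorm (y - z) ^+ 2.
Proof.
move=> wc ng hc am gy.
have gyf : g y \is a fin_num by rewrite fin_numE ng gy.
have [gmf Hm] : g m \is a fin_num /\ fine (g m) + c * enorm (m - z) ^+ 2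
    <= fine (g y) + c * enorm (y - z) ^+ 2.
  by apply: fin_le => //; rewrite EFinD fineK //; exact: am.
split=> //.
set Gm := fine (g m); set Gy := fine (g y).
apply: lim_lem.
  by apply: mulr_ge0; [rewrite subr_ge0 | exact: sqr_ge0].
move=> t t0 t1.
set w := t *: y + (1 - t) *: m.
have := wc y m t (ltW t0) (ltW t1).
rewrite -(fineK gyf) -(fineK gmf) -/Gm -/Gy -!EFinD -/w => Hw.
have [gwf {}Hw] := fin_le _ _ _ (ng w) Hw.
have := am w; rewrite -(fineK gwf) -(fineK gmf) -/Gm -!EFinD lee_fin => Ha.
have ewz : w - z = t *: (y - z) + (1 - t) *: (m - z).
  by apply/matrixP => i j; rewrite !mxE; ring.
have eym : (y - z) - (m - z) = y - m.
  by apply/matrixP => i j; rewrite !mxE; ring.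
have ew : enorm w ^+ 2 = t * enorm y ^+ 2 + (1 - t) * enorm m ^+ 2 - t * (1 - t) * enorm (y - m) ^+ 2.
  exact: enorm_comb.
move: Hw Ha; rewrite ewz !enorm_comb eym => Hw Ha.
set Gw := fine (g w) in Hw Ha.
have : t * (Gm + c * enorm (m - z) ^+ 2 + (c - rho / 2) * enorm (y - m) ^+ 2 * (1 - t)
   - (Gy + c * enorm (y - z) ^+ 2)) <= 0.
  set D := enorm (y - m) ^+ 2 in Hw Ha *.
  set Y := enorm y ^+ 2 in Hw Ha *.
  set M := enorm m ^+ 2 in Hw Ha *.
  set Yz := enorm (y - z) ^+ 2 in Hw Ha *.
  set Mz := enorm (m - z) ^+ 2 in Hw Ha *.
  lra.
by rewrite pmulr_rle0 // subr_le0.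
Qed.

Lemma shift_id (mu theta : R) (x0 xk y1 y2 : 'rV[R]_d) : 0 < mu -> 0 <= theta ->
  (1 + theta * mu) / (2 * mu) *
    enorm (y1 - (1 + theta * mu)^-1 *: (x0 + (theta * mu) *: xk)) ^+ 2 -
  (1 + theta * mu) / (2 * mu) *
    enorm (y2 - (1 + theta * mu)^-1 *: (x0 + (theta * mu) *: xk)) ^+ 2 =
  (1 / (2 * mu) * enorm (y1 - x0) ^+ 2 + theta / 2 * enorm (y1 - xk) ^+ 2) -
  (1 / (2 * mu) * enorm (y2 - x0) ^+ 2 + theta / 2 * enorm (y2 - xk) ^+ 2).
Proof.
move=> mu0 th0.
have h1 : 1 + theta * mu != 0 by rewrite gt_eqF //; nra.
have h2 : mu != 0 by rewrite gt_eqF.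
rewrite !enorm2 /edot !mulr_sumr -!big_split /= -!sumrB.
apply: eq_bigr => i _; rewrite !mxE; field.
by rewrite h1 h2.
Qed.
End Aux.

Theorem mainTheorem9 (R : realType) (d : nat) (rho q : R)
  (f : 'rV[R]_d -> \bar R) (fm : 'rV[R]_d -> 'rV[R]_d -> \bar R)
  (a mu theta : R) (x : nat -> 'rV[R]_d) (p : 'rV[R]_d) (K : nat) :
  0 <= rho -> 0 <= q ->
  closed_fun f -> no_minus_infty f -> proper_fun f -> weakly_convex rho f ->
  two_sided_model rho q f fm ->
  0 < a -> a < 1 -> 0 < mu -> rho + q < mu^-1 -> q < theta ->
  (forall k, is_argmin (fun y => (fm (x k) y +
      ((1 + theta * mu) / (2 * mu) *
        enorm (y - (1 + theta * mu)^-1 *: (x 0%N + (theta * mu) *: x k))%R ^+ 2)%:E)%E)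
      (x k.+1)) ->
  is_prox mu f (x 0%N) p ->
  2 * ln a^-1 / ln ((mu^-1 - rho + theta) / (q + theta)) <= K%:R ->
  enorm (x K - p) <= a * enorm (x 0%N - p).
Proof.
move=> rho0 q0 _ nf [y0 y0f] wcf tsm a0 a1 mu0 hmu hth hx hp hK.
have qt0 : 0 < q + theta by lra.
have s0 : 0 < mu^-1 - rho + theta by lra.
set r := (q + theta) / (mu^-1 - rho + theta).
have r0 : 0 < r by rewrite divr_gt0.
have y0fin : f y0 \is a fin_num by rewrite fin_numE nf lt_eqF.
have [fpf _] : f p \is a fin_num /\ fine (f p) + 1 / (2 * mu) * enorm (p - x 0%N) ^+ 2
   <= fine (f y0) + 1 / (2 * mu) * enorm (y0 - x 0%N) ^+ 2.
  by apply: fin_le => //; rewrite EFinD fineK //; exact: hp.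
have mi : mu^-1 = 1 / mu by rewrite div1r.
have eC : (1 + theta * mu) / (2 * mu) = mu^-1 / 2 + theta / 2.
  by field; rewrite gt_eqF.
have eC2 : 1 / (2 * mu) = mu^-1 / 2 by field; rewrite gt_eqF.
have hc1 : rho / 2 <= (1 + theta * mu) / (2 * mu) by rewrite eC; lra.
have hc2 : rho / 2 <= 1 / (2 * mu) by rewrite eC2; lra.
have step k : enorm (x k.+1 - p) ^+ 2 <= r * enorm (x k - p) ^+ 2.
  have [_ nk wck Hm] := tsm (x k).
  have [Mp1 _] := Hm p; have [_ Mx2] := Hm (x k.+1).
  move: Mp1; rewrite -(fineK fpf) -EFinD => Mp1.
  have gpf : fm (x k) p != +oo%E by apply: contraTneq Mp1 => ->.
  have [g1f H2] := @sc _ _ _ _ ((1 + theta * mu) / (2 * mu)) _ _ _ wck nk hc1 (hx k) gpf.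
  have gpfin : fm (x k) p \is a fin_num by rewrite fin_numE nk gpf.
  move: Mp1; rewrite -(fineK gpfin) lee_fin => Mp1.
  move: Mx2; rewrite -(fineK g1f) -EFinD => Mx2.
  have f1f : f (x k.+1) != +oo%E by apply: contraTneq Mx2 => ->.
  have f1fin : f (x k.+1) \is a fin_num by rewrite fin_numE nf f1f.
  move: Mx2; rewrite -(fineK f1fin) lee_fin => Mx2.
  have [_ H1] := @sc _ _ _ _ (1 / (2 * mu)) _ _ _ wcf nf hc2 hp f1f.
  have th0 : 0 <= theta by lra.
  have Hid := @shift_id _ _ mu theta (x 0%N) (x k) (x k.+1) p mu0 th0.
  move: H1 H2 Hid Mp1 Mx2.
  rewrite eC eC2 (@enormN _ _ p (x k.+1)) (@enormN _ _ p (x k)).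
  set D := enorm (x k.+1 - p) ^+ 2; set P := enorm (x k - p) ^+ 2.
  set B := enorm (x k.+1 - x k) ^+ 2.
  have D0 : 0 <= D by exact: sqr_ge0.
  have B0 : 0 <= B by exact: sqr_ge0.
  have h1 : 0 <= (mu^-1 - rho) * D by apply: mulr_ge0 => //; lra.
  have h2 : 0 <= (theta - q) * B by apply: mulr_ge0 => //; lra.
  move=> H1 H2 Hid Mp1 Mx2.
  rewrite /r mulrAC ler_pdivlMr // mulrC.
  lra.
have ind k : enorm (x k - p) ^+ 2 <= r ^+ k * enorm (x 0%N - p) ^+ 2.
  elim: k => [|k IH]; first by rewrite expr0 mul1r.
  apply: le_trans (step k) _.
  have -> : r ^+ k.+1 * enorm (x 0%N - p) ^+ 2 = r * (r ^+ k * enorm (x 0%N - p) ^+ 2).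
    by rewrite exprS mulrA.
  exact: (ler_wpM2l (ltW r0) IH).
have lr : ln r < 0.
  apply: ln_lt0; rewrite r0 /= /r ltr_pdivrMr // mul1r; lra.
have rK : r ^+ K <= a ^+ 2.
  move: hK; have -> : (mu^-1 - rho + theta) / (q + theta) = r^-1 by rewrite /r invf_div.
  rewrite !lnV ?posrE // ler_pdivrMr; last by lra.
  move=> hK.
  have rKp : r ^+ K \in Num.pos by rewrite posrE; apply: exprn_gt0.
  have a2p : a ^+ 2 \in Num.pos by rewrite posrE; apply: exprn_gt0.
  rewrite -(ler_ln rKp a2p) !lnXn // -[ln r *+ K]mulr_natr -[ln a *+ 2]mulr_natr.
  lra.
have n1 : enorm (x K - p) \in Num.nneg by rewrite nnegrE enorm_ge0.
have n2 : a * enorm (x 0%N - p) \in Num.nneg by rewrite nnegrE mulr_ge0 ?enorm_ge0 ?ltW.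
rewrite -(ler_sqr n1 n2).
rewrite exprMn; apply: le_trans (ind K) _.
by apply: ler_wpM2r => //; exact: sqr_ge0.
Qed.
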